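(* Let $\mathit{VI}$ be a finite set of variables with $\#\mathit{VI}=n$ and $1\le k\le n$. For each $sh_1,sh_2\in\mathit{SH}$ and each $V\subseteq\mathit{VI}$: if $\rho_{\mathit{TSD}_k}(sh_1)=\rho_{\mathit{TSD}_k}(sh_2)$ then $\rho_{\mathit{TSD}_k}(\mathrm{proj}(sh_1,V))=\rho_{\mathit{TSD}_k}(\mathrm{proj}(sh_2,V))$.
   Context: $\mathit{SG}=\wp(\mathit{VI})\setminus\{\emptyset\}$, $\mathit{SH}=\wp(\mathit{SG})$. $\rho_{\mathit{TSD}_k}(sh)=\{\,S\in\mathit{SG}\mid \forall T\subseteq S:\ \#T<k\implies S=\bigcup\{U\in sh\mid T\subseteq U\subseteq S\}\,\}$. $\mathrm{proj}(sh,V)=\{S\cap V\mid S\in sh, S\cap V\ne\emptyset\}\cup\{\{x\}\mid x\in\mathit{VI}\setminus V\}$. *)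

(* Defs.v *)
From mathcomp Require Import all_boot.
Set Implicit Arguments. Unset Strict Implicit. Unset Printing Implicit Defensive.

(* VI is modelled by a finite type T.  SG = nonempty subsets of T,
   SH = sets of elements of SG. *)

Definition is_SH (T : finType) (sh : {set {set T}}) : Prop :=
  set0 \notin sh.

Definition rhoTSD (T : finType) (k : nat) (sh : {set {set T}}) : {set {set T}} :=
  [set S : {set T} | (S != set0) &&
     [forall X : {set T}, ((X \subset S) && (#|X| < k)) ==>
        (S == \bigcup_(U in sh | (X \subset U) && (U \subset S)) U)]].

Definition proj (T : finType) (sh : {set {set T}}) (V : {set T}) : {set {set T}} :=
  [set S :&: V | S in sh & S :&: V != set0] :|: [set [set x] | x in ~: V].

(* Main.v *)
Require Import Defs.
From mathcomp Require Import all_boot.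
Set Implicit Arguments. Unset Strict Implicit.

Definition Pk (T : finType) (k : nat) (sh : {set {set T}}) (S : {set T}) :=
  forall X : {set T}, X \subset S -> #|X| < k -> forall x, x \in S ->
  exists2 U, U \in sh & [&& X \subset U, U \subset S & x \in U].

Lemma rhoP (T : finType) k (sh : {set {set T}}) S :
  S \in rhoTSD k sh <-> S != set0 /\ Pk k sh S.
Proof.
rewrite inE; split.
  move/andP=> [ne /forallP H]; split=> // X XS Xk x xS.
  have/implyP := H X; rewrite XS Xk => /(_ isT) /eqP E.
  move: (xS); rewrite {1}E => /bigcupP [U /andP[Uin /andP[XU US]] xU].
  by exists U => //; rewrite XU US xU.
move=> [ne H]; rewrite ne /=; apply/forallP => X; apply/implyP=> /andP[XS Xk].
apply/eqP/setP=> x; apply/idP/idP.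
  move=> xS; have [U Uin /and3P[XU US xU]] := H X XS Xk x xS.
  by apply/bigcupP; exists U => //; rewrite Uin XU US.
by move/bigcupP=> [U /andP[_ /andP[_ US]] xU]; apply: (subsetP US).
Qed.

Lemma projP (T : finType) (sh : {set {set T}}) V W :
  W \in proj sh V <->
  (exists2 U, U \in sh & W = U :&: V /\ U :&: V != set0) \/
  (exists2 y, y \notin V & W = [set y]).
Proof.
rewrite /proj in_setU; split.
  case/orP.
    by move/imsetP=> [U]; rewrite inE => /andP[Uin ne] ->; left; exists U.
  by move/imsetP=> [y]; rewrite inE => yV ->; right; exists y.
case=> [[U Uin [-> ne]]|[y yV ->]]; apply/orP.
  by left; apply/imsetP; exists U => //; rewrite inE Uin ne.
by right; apply/imsetP; exists y => //; rewrite inE.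
Qed.

Lemma key (T : finType) k (sh : {set {set T}}) V S :
  Pk k (proj sh V) S <-> Pk k (proj (rhoTSD k sh) V) S.
Proof.
split=> H X XS Xk x xS; have [W Win /and3P[XW WS xW]] := H X XS Xk x xS.
  case/projP: Win => [[U Uin [EW ne]]|[y yV EW]].
    exists W; last by rewrite XW WS xW.
    apply/projP; left; exists U => //.
    apply/rhoP; split.
      by apply: contra ne => /eqP ->; rewrite set0I.
    move=> X' X'U X'k z zU; exists U => //; by rewrite X'U subxx zU.
  by exists W; [apply/projP; right; exists y | rewrite XW WS xW].
case/projP: Win => [[U Uin [EW ne]]|[y yV EW]].
  have XU : X \subset U by apply: subset_trans XW _; rewrite EW subsetIl.
  have XV : X \subset V by apply: subset_trans XW _; rewrite EW subsetIr.
  have xU : x \in U by move: xW; rewrite EW inE => /andP[].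
  have xV : x \in V by move: xW; rewrite EW inE => /andP[].
  have [_ HU] := (rhoP _ _ _).1 Uin.
  have [U' U'in /and3P[XU' U'U xU']] := HU X XU Xk x xU.
  exists (U' :&: V).
    apply/projP; left; exists U' => //; split => //.
    by apply/set0Pn; exists x; rewrite inE xU' xV.
  rewrite subsetI XU' XV inE xU' xV andbT /=.
  by rewrite andbT; apply: (subset_trans _ WS); rewrite EW setSI.
by exists W; [apply/projP; right; exists y | rewrite XW WS xW].
Qed.

Lemma rho_proj (T : finType) k (sh : {set {set T}}) V :
  rhoTSD k (proj sh V) = rhoTSD k (proj (rhoTSD k sh) V).
Proof.
apply/setP=> S; apply/idP/idP.
  by move/rhoP=> [ne H]; apply/rhoP; split => //; apply: (proj1 (key k sh V S) H).
by move/rhoP=> [ne H]; apply/rhoP; split => //; apply: (proj2 (key k sh V S) H).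
Qed.

Theorem lemma3p22 (T : finType) (n k : nat) (sh1 sh2 : {set {set T}})
  (V : {set T}) :
  #|T| = n -> 1 <= k <= n ->
  is_SH sh1 -> is_SH sh2 ->
  rhoTSD k sh1 = rhoTSD k sh2 ->
  rhoTSD k (proj sh1 V) = rhoTSD k (proj sh2 V).
Proof.
by move=> _ _ _ _ E; rewrite rho_proj E -rho_proj.
Qed.
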